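(* For every integer $t\ge1$, $$-\frac{1}{8t^2}<\frac{S_1(t)}{(-1)^t\binom{-3/2}{t}}-\frac{(-1)^t}{\binom{-3/2}{t}}\bigl(\cosh\alpha-1\bigr)+\frac{\alpha\sinh\alpha}{2t}<\frac{13}{25t^2}.$$
   Context: $\alpha=\pi/6$. $(a)_m=a(a+1)\cdots(a+m-1)$ is the rising factorial ($(a)_0=1$); $\binom{x}{m}=x(x-1)\cdots(x-m+1)/m!$. For $t\ge0$, $$S_1(t)=\sum_{s=1}^t\frac{(-1)^s(1/2-s)_{s+1}}{s}\sum_{u=1}^s\frac{(-1)^u(-s)_u}{(s+u)!\,(2u-1)!}\left(\frac{\pi^2}{36}\right)^u.$$ *)

(* Defs.v *)
From Stdlib Require Import Reals List Arith Factorial.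
Import ListNotations.
Open Scope R_scope.

(* sum_{k=m}^{n} f k  (empty, i.e. 0, when n < m) *)
Definition sumR (m n : nat) (f : nat -> R) : R :=
  fold_right Rplus 0 (map f (seq m (S n - m))).

Fixpoint prodR (m : nat) (f : nat -> R) : R :=
  match m with
  | O => 1
  | S m' => prodR m' f * f m'
  end.

Definition rising (a : R) (m : nat) : R := prodR m (fun k => a + INR k).

Definition gbinom (x : R) (m : nat) : R :=
  prodR m (fun k => x - INR k) / INR (fact m).

Definition alpha : R := PI / 6.

Definition S1 (t : nat) : R :=
  sumR 1 t (fun s =>
    (-1) ^ s * rising (/2 - INR s) (S s) / INR s *
    sumR 1 s (fun u =>
      (-1) ^ u * rising (- INR s) u
        / (INR (fact (s + u)) * INR (fact (2 * u - 1)))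
        * (PI ^ 2 / 36) ^ u)).

(* Main.v *)
Require Import Defs.
From Stdlib Require Import Reals Lra Lia Psatz List Arith Factorial.
Open Scope R_scope.

Fixpoint sm (n : nat) (f : nat -> R) : R :=
  match n with O => 0 | S n' => sm n' f + f n' end.

Lemma smS n f : sm (S n) f = sm n f + f n.
Proof. reflexivity. Qed.

Lemma sm_ext n f g : (forall k, (k < n)%nat -> f k = g k) -> sm n f = sm n g.
Proof. induction n; simpl; intros H; [reflexivity|]. rewrite IHn by (intros; apply H; lia). rewrite H by lia. reflexivity. Qed.

Lemma sm_plus n f g : sm n (fun k => f k + g k) = sm n f + sm n g.
Proof. induction n; simpl; [ring|]. rewrite IHn; ring. Qed.

Lemma sm_scale n c f : sm n (fun k => c * f k) = c * sm n f.
Proof. induction n; simpl; [ring|]. rewrite IHn; ring. Qed.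

Lemma sm_le n f g : (forall k, f k <= g k) -> sm n f <= sm n g.
Proof. induction n; simpl; intros H; [lra|]. specialize (IHn H). specialize (H n). lra. Qed.

Lemma sm_cons n f : sm (S n) f = f 0%nat + sm n (fun k => f (S k)).
Proof. induction n; simpl in *; [ring|]. rewrite IHn. ring. Qed.

Lemma sm_swap n m (f : nat -> nat -> R) :
  sm n (fun i => sm m (fun j => f i j)) = sm m (fun j => sm n (fun i => f i j)).
Proof. induction n; simpl.
 - induction m; simpl; [reflexivity|]. rewrite <- IHm. ring.
 - rewrite IHn. rewrite <- sm_plus. reflexivity. Qed.

Lemma sm_zero_tail s N f : (forall k, (s <= k)%nat -> f k = 0) -> (s <= N)%nat -> sm N f = sm s f.
Proof. intros H HN. induction HN; [reflexivity|]. simpl. rewrite IHHN, H by lia. ring. Qed.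

Lemma fold_sm a n f : fold_right Rplus 0 (map f (seq a n)) = sm n (fun k => f (a + k)%nat).
Proof. revert a; induction n; intros a; [reflexivity|].
 rewrite sm_cons. simpl. rewrite IHn. rewrite Nat.add_0_r. f_equal. apply sm_ext. intros; f_equal; lia. Qed.

Lemma sumR_sm t f : sumR 1 t f = sm t (fun k => f (S k)).
Proof. unfold sumR. replace (S t - 1)%nat with t by lia. rewrite fold_sm. reflexivity. Qed.
Definition bb (j t : nat) : R :=
  if (j <=? t)%nat then INR (fact (2*t)) / (INR (fact (t+j)) * INR (fact (t-j)) * 4^t) else 0.

Lemma factS n : INR (fact (S n)) = INR (S n) * INR (fact n).
Proof. change (fact (S n)) with (S n * fact n)%nat. apply mult_INR. Qed.

Lemma fpos n : 0 < INR (fact n).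
Proof. apply lt_0_INR, lt_O_fact. Qed.

Lemma bbT u t : (bb u t + bb (S u) t) - (bb u (S t) + bb (S u) (S t))
  = (INR (S u) * bb (S u) (S t) - INR u * bb u (S t)) / INR (S t).
Proof.
  unfold bb.
  destruct (Nat.le_gt_cases (S u) t) as [H|H].
  - destruct (Nat.le_exists_sub (S u) t H) as [e [He _]]. subst t.
    rewrite (proj2 (Nat.leb_le u (e + S u))) by lia.
    rewrite (proj2 (Nat.leb_le (S u) (e + S u))) by lia.
    rewrite (proj2 (Nat.leb_le u (S (e + S u)))) by lia.
    rewrite (proj2 (Nat.leb_le (S u) (S (e + S u)))) by lia.
    replace (2 * S (e + S u))%nat with (S (S (2 * (e + S u)))) by lia.
    replace (e + S u + u)%nat with (S (2*u+e)) by lia.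
    replace (e + S u - u)%nat with (S e) by lia.
    replace (e + S u + S u)%nat with (S (S (2*u+e))) by lia.
    replace (e + S u - S u)%nat with e by lia.
    replace (S (e + S u) + u)%nat with (S (S (2*u+e))) by lia.
    replace (S (e + S u) - u)%nat with (S (S e)) by lia.
    replace (S (e + S u) + S u)%nat with (S (S (S (2*u+e)))) by lia.
    replace (S (e + S u) - S u)%nat with (S e) by lia.
    rewrite !factS.
    pose proof (fpos e). pose proof (fpos (2*u+e)). pose proof (fpos (2*(e+S u))).
    assert (0 < 4 ^ (e + S u)) by (apply pow_lt; lra).
    repeat rewrite ?S_INR, ?plus_INR, ?mult_INR. rewrite ?INR_0. simpl pow.
    pose proof (pos_INR u). pose proof (pos_INR e).
    generalize dependent (INR (fact e)). generalize dependent (INR (fact (2*u+e))).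
    generalize dependent (INR (fact (2*(e+S u)))). generalize dependent (4 ^ (e + S u)).
    generalize dependent (INR u). generalize dependent (INR e). intros.
    field. repeat split; lra.
  - destruct (Nat.eq_dec u t) as [E|E].
    + subst t.
      rewrite (proj2 (Nat.leb_le u u)) by lia.
      rewrite (proj2 (Nat.leb_gt (S u) u)) by lia.
      rewrite (proj2 (Nat.leb_le u (S u))) by lia.
      rewrite (proj2 (Nat.leb_le (S u) (S u))) by lia.
      replace (2 * S u)%nat with (S (S (2 * u))) by lia.
      replace (u + u)%nat with (2*u)%nat by lia.
      replace (u - u)%nat with 0%nat by lia.
      replace (S u + u)%nat with (S (2*u)) by lia.
      replace (S u - u)%nat with 1%nat by lia.
      replace (S u + S u)%nat with (S (S (2*u))) by lia.
      replace (S u - S u)%nat with 0%nat by lia.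
      rewrite !factS. change (fact 0) with 1%nat.
      pose proof (fpos (2*u)).
      assert (0 < 4 ^ u) by (apply pow_lt; lra).
      repeat rewrite ?S_INR, ?plus_INR, ?mult_INR. rewrite ?INR_0. simpl pow.
      pose proof (pos_INR u).
      generalize dependent (INR (fact (2*u))). generalize dependent (4 ^ u).
      generalize dependent (INR u). intros.
      field. repeat split; lra.
    + destruct (Nat.eq_dec u (S t)) as [E2|E2].
      * subst u.
        rewrite (proj2 (Nat.leb_gt (S t) t)) by lia.
        rewrite (proj2 (Nat.leb_gt (S (S t)) t)) by lia.
        rewrite (proj2 (Nat.leb_le (S t) (S t))) by lia.
        rewrite (proj2 (Nat.leb_gt (S (S t)) (S t))) by lia.
        replace (S t + S t)%nat with (2 * S t)%nat by lia.
        replace (S t - S t)%nat with 0%nat by lia.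
        simpl (fact 0). pose proof (fpos (2 * S t)).
        assert (0 < 4 ^ S t) by (apply pow_lt; lra).
        pose proof (pos_INR t). repeat rewrite ?S_INR, ?INR_0.
        generalize dependent (INR (fact (2 * S t))). generalize dependent (4 ^ S t).
        generalize dependent (INR t). intros.
        field. repeat split; lra.
      * rewrite (proj2 (Nat.leb_gt u t)) by lia.
        rewrite (proj2 (Nat.leb_gt (S u) t)) by lia.
        rewrite (proj2 (Nat.leb_gt u (S t))) by lia.
        rewrite (proj2 (Nat.leb_gt (S u) (S t))) by lia.
        pose proof (pos_INR t). rewrite S_INR. unfold Rdiv; ring.
Qed.

Fixpoint G (u t : nat) : R :=
  match u with O => 0 | S u' => G u' t + bb u' t + bb (S u') t end.

Lemma TG u t : G u t - G u (S t) = INR u * bb u (S t) / INR (S t).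
Proof.
  pose proof (pos_INR t). assert (INR (S t) <> 0) by (rewrite S_INR; lra).
  induction u.
  - simpl. field. auto.
  - simpl G. pose proof (bbT u t).
    replace (G u t + bb u t + bb (S u) t - (G u (S t) + bb u (S t) + bb (S u) (S t)))
      with ((G u t - G u (S t)) + (bb u t + bb (S u) t - (bb u (S t) + bb (S u) (S t)))) by ring.
    rewrite IHu, H1. field. auto.
Qed.

Lemma bb00 : bb 0 0 = 1.
Proof. unfold bb. simpl. field. Qed.

Lemma bbS0 j : bb (S j) 0 = 0.
Proof. reflexivity. Qed.

Lemma G0 u : (1 <= u)%nat -> G u 0 = 1.
Proof.
  intros H. induction H.
  - simpl. rewrite bb00, bbS0. ring.
  - simpl G. rewrite IHle. destruct m; [lia|]. rewrite !bbS0. ring.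
Qed.

Lemma sumq u t : (1 <= u)%nat -> INR u * sm t (fun k => bb u (S k) / INR (S k)) = 1 - G u t.
Proof.
  intros Hu. induction t.
  - simpl. rewrite G0 by auto. ring.
  - rewrite smS; cbv beta. pose proof (TG u t).
    replace (INR u * (sm t (fun k => bb u (S k) / INR (S k)) + bb u (S t) / INR (S t)))
      with (INR u * sm t (fun k => bb u (S k) / INR (S k)) + INR u * bb u (S t) / INR (S t)) by (unfold Rdiv; ring).
    rewrite IHt, <- H. ring.
Qed.

Lemma bb_nn j t : 0 <= bb j t.
Proof.
  unfold bb. destruct (j <=? t)%nat; [|lra].
  pose proof (fpos (2*t)). pose proof (fpos (t+j)). pose proof (fpos (t-j)).
  assert (0 < 4^t) by (apply pow_lt; lra).
  apply Rlt_le. apply Rdiv_lt_0_compat; [lra|]. repeat apply Rmult_lt_0_compat; lra.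
Qed.

Lemma bb_step j t : bb (S j) t * INR (t + S j) = bb j t * INR (t - j).
Proof.
  destruct (Nat.le_gt_cases t j) as [H|H].
  - unfold bb. rewrite (proj2 (Nat.leb_gt (S j) t)) by lia.
    replace (t - j)%nat with 0%nat by lia. simpl INR. ring.
  - destruct (Nat.le_exists_sub (S j) t H) as [e [He _]]. subst t. unfold bb.
    rewrite (proj2 (Nat.leb_le j (e + S j))) by lia.
    rewrite (proj2 (Nat.leb_le (S j) (e + S j))) by lia.
    replace (e + S j + j)%nat with (S (2*j+e)) by lia.
    replace (e + S j - j)%nat with (S e) by lia.
    replace (e + S j + S j)%nat with (S (S (2*j+e))) by lia.
    replace (e + S j - S j)%nat with e by lia.
    rewrite !factS.
    pose proof (fpos e). pose proof (fpos (2*j+e)). pose proof (fpos (2*(e+S j))).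
    assert (0 < 4 ^ (e + S j)) by (apply pow_lt; lra).
    repeat rewrite ?S_INR, ?plus_INR, ?mult_INR. rewrite ?INR_0.
    pose proof (pos_INR j). pose proof (pos_INR e).
    generalize dependent (INR (fact e)). generalize dependent (INR (fact (2*j+e))).
    generalize dependent (INR (fact (2*(e+S j)))). generalize dependent (4 ^ (e + S j)).
    generalize dependent (INR j). generalize dependent (INR e). intros.
    field. repeat split; lra.
Qed.

Lemma bb_dec j t : bb (S j) t <= bb j t.
Proof.
  pose proof (bb_step j t). pose proof (bb_nn j t). pose proof (bb_nn (S j) t).
  destruct (Nat.le_gt_cases t j) as [Hl|Hl].
  - unfold bb at 1. rewrite (proj2 (Nat.leb_gt (S j) t)) by lia. lra.
  - rewrite minus_INR in H by lia. rewrite plus_INR, S_INR in H.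
    pose proof (pos_INR t). pose proof (pos_INR j).
    assert (INR j < INR t) by (apply lt_INR; lia).
    nra.
Qed.

Lemma bb_le0 j t : bb j t <= bb 0 t.
Proof. induction j; [lra|]. pose proof (bb_dec j t). lra. Qed.

Lemma bb_low j t : (1 <= t)%nat -> bb 0 t * (1 - INR j ^ 2 / INR t) <= bb j t.
Proof.
  intros Ht. assert (HT : 1 <= INR t) by (apply (le_INR 1); lia).
  pose proof (bb_nn 0 t) as HB.
  induction j.
  - simpl. replace (0*0)%R with 0 by ring. unfold Rdiv. rewrite Rmult_0_l. lra.
  - pose proof (bb_step j t) as Hs. pose proof (bb_nn (S j) t).
    assert (HT0 : 0 < INR t) by lra.
    destruct (Nat.le_gt_cases t j) as [Hl|Hl].
    + assert (INR t <= INR (S j)) by (apply le_INR; lia).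
      assert (1 <= INR (S j) ^ 2 / INR t).
      { apply (Rmult_le_reg_r (INR t)); [lra|]. unfold Rdiv. rewrite Rmult_assoc, Rinv_l by lra. nra. }
      assert (bb 0 t * (1 - INR (S j) ^ 2 / INR t) <= 0).
      { assert (0 <= bb 0 t * (INR (S j) ^ 2 / INR t - 1)) by (apply Rmult_le_pos; lra). lra. }
      lra.
    + rewrite minus_INR in Hs by lia. rewrite plus_INR, S_INR in Hs. rewrite S_INR.
      assert (INR j < INR t) by (apply lt_INR; lia). pose proof (pos_INR j).
      set (J := INR j) in *. set (T := INR t) in *.
      set (c := J ^ 2 / T) in *. set (d := (J + 1) ^ 2 / T).
      assert (Hc : c * T = J ^ 2) by (unfold c; field; lra).
      assert (Hd : d * T = (J+1) ^ 2) by (unfold d; field; lra).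
      assert (0 <= c) by (unfold c; apply Rmult_le_pos; [nra| apply Rlt_le, Rinv_0_lt_compat; lra]).
      assert (0 <= d) by (unfold d; apply Rmult_le_pos; [nra| apply Rlt_le, Rinv_0_lt_compat; lra]).
      assert (K1 : bb 0 t * (1 - c) * (T - J) <= bb j t * (T - J)) by (apply Rmult_le_compat_r; lra).
      assert (K2 : bb 0 t * (1 - d) * (T + J + 1) <= bb 0 t * (1 - c) * (T - J)).
      { assert (E : bb 0 t * (1 - c) * (T - J) - bb 0 t * (1 - d) * (T + J + 1)
                = bb 0 t * (c * J + d * (J + 1))).
        { replace (bb 0 t * (1 - c) * (T - J) - bb 0 t * (1 - d) * (T + J + 1))
            with (bb 0 t * (- 2 * J - 1 - c * T + c * J + d * T + d * (J + 1))) by ring.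
          rewrite Hc, Hd. ring. }
        assert (0 <= bb 0 t * (c * J + d * (J + 1))) by (apply Rmult_le_pos; nra).
        lra. }
      apply (Rmult_le_reg_r (T + J + 1)); [lra|]. lra.
Qed.

Lemma G_up u t : G u t <= 2 * INR u * bb 0 t.
Proof.
  induction u; simpl G.
  - simpl. lra.
  - pose proof (bb_le0 u t). pose proof (bb_le0 (S u) t). rewrite S_INR. lra.
Qed.

Lemma G_low u t : (1 <= t)%nat -> bb 0 t * (2 * INR u - INR u ^ 3 / INR t) <= G u t.
Proof.
  intros Ht. assert (HT : 1 <= INR t) by (apply (le_INR 1); lia).
  pose proof (bb_nn 0 t) as HB.
  induction u; simpl G.
  - simpl. unfold Rdiv. lra.
  - pose proof (bb_low u t Ht). pose proof (bb_low (S u) t Ht).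
    rewrite S_INR in *. pose proof (pos_INR u).
    set (U := INR u) in *. set (T := INR t) in *.
    assert (E : bb 0 t * (2 * (U + 1) - (U + 1) ^ 3 / T)
      = bb 0 t * (2 * U - U ^ 3 / T) + bb 0 t * (1 - U ^ 2 / T) + bb 0 t * (1 - (U + 1) ^ 2 / T)
        - bb 0 t * ((U^2 + U) / T)) by (field; lra).
    assert (0 <= bb 0 t * ((U^2 + U) / T)).
    { apply Rmult_le_pos; [lra|]. apply Rmult_le_pos; [nra| apply Rlt_le, Rinv_0_lt_compat; lra]. }
    lra.
Qed.

Lemma gfact t : (-1) ^ t * prodR t (fun k => -3/2 - INR k) * INR (fact t) * 4 ^ t
  = INR (2 * t + 1) * INR (fact (2 * t)).
Proof.
  induction t.
  - simpl. ring.
  - replace (2 * S t)%nat with (S (S (2 * t))) by lia.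
    rewrite !factS. simpl prodR. simpl pow.
    replace ((-1) * (-1) ^ t * (prodR t (fun k : nat => -3 / 2 - INR k) * (-3 / 2 - INR t)) *
      (INR (S t) * INR (fact t)) * (4 * 4 ^ t))
      with (((-1) ^ t * prodR t (fun k : nat => -3 / 2 - INR k) * INR (fact t) * 4 ^ t) * ((3/2 + INR t) * INR (S t) * 4)) by field.
    rewrite IHt. repeat rewrite ?S_INR, ?plus_INR, ?mult_INR. simpl INR. field.
Qed.

Lemma g_eq t : (-1) ^ t * gbinom (-3/2) t = INR (2 * t + 1) * bb 0 t.
Proof.
  unfold gbinom, bb. rewrite (proj2 (Nat.leb_le 0 t)) by lia.
  rewrite Nat.add_0_r, Nat.sub_0_r.
  pose proof (gfact t). pose proof (fpos t). pose proof (fpos (2*t)).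
  assert (0 < 4 ^ t) by (apply pow_lt; lra).
  apply (Rmult_eq_reg_r (INR (fact t) * INR (fact t) * 4 ^ t)); [| apply Rgt_not_eq; apply Rmult_lt_0_compat; nra].
  generalize dependent (prodR t (fun k : nat => -3 / 2 - INR k)). intros P H.
  replace ((-1) ^ t * (P / INR (fact t)) * (INR (fact t) * INR (fact t) * 4 ^ t)) with ((-1) ^ t * P * INR (fact t) * 4 ^ t) by (field; lra).
  rewrite H. field. lra.
Qed.

Lemma bb0_pos t : 0 < bb 0 t.
Proof.
  unfold bb. rewrite (proj2 (Nat.leb_le 0 t)) by lia.
  pose proof (fpos (2*t)). pose proof (fpos (t+0)). pose proof (fpos (t-0)).
  assert (0 < 4^t) by (apply pow_lt; lra).
  apply Rdiv_lt_0_compat; [lra|]. repeat apply Rmult_lt_0_compat; lra.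
Qed.

Lemma rising_S a m : rising a (S m) = rising a m * (a + INR m).
Proof. reflexivity. Qed.

Lemma rising_shift a m : rising a (S m) = a * rising (a + 1) m.
Proof.
  induction m.
  - unfold rising. simpl. ring.
  - rewrite rising_S, IHm, rising_S, S_INR. ring.
Qed.

Lemma Pval s : (-1) ^ s * rising (/2 - INR s) (S s) * 2 * 4 ^ s * INR (fact s) = INR (fact (2 * s)).
Proof.
  induction s.
  - unfold rising. simpl. field.
  - rewrite rising_shift.
    replace (/ 2 - INR (S s) + 1) with (/2 - INR s) by (rewrite S_INR; ring).
    replace (2 * S s)%nat with (S (S (2 * s))) by lia.
    rewrite !factS. simpl pow.
    replace ((-1) * (-1) ^ s * ((/ 2 - INR (S s)) * rising (/ 2 - INR s) (S s)) * 2 * (4 * 4 ^ s) *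
      (INR (S s) * INR (fact s)))
    with (((-1) ^ s * rising (/ 2 - INR s) (S s) * 2 * 4 ^ s * INR (fact s)) * ((INR (S s) - /2) * INR (S s) * 4)) by ring.
    rewrite IHs. repeat rewrite ?S_INR, ?plus_INR, ?mult_INR. simpl INR. field.
Qed.

Lemma prodR_zero m f k : (k < m)%nat -> f k = 0 -> prodR m f = 0.
Proof.
  intros Hk Hf. induction m; [lia|]. simpl.
  destruct (Nat.eq_dec k m); [subst; rewrite Hf; ring|]. rewrite IHm by lia. ring.
Qed.

Lemma Qval s u : (u <= s)%nat -> (-1) ^ u * rising (- INR s) u * INR (fact (s - u)) = INR (fact s).
Proof.
  induction u; intros H.
  - unfold rising. simpl. rewrite Nat.sub_0_r. ring.
  - rewrite rising_S. 
    replace (s - u)%nat with (S (s - S u)) in IHu by lia.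
    rewrite factS in IHu. rewrite <- IHu by lia.
    replace (INR (S (s - S u))) with (INR s - INR u) by (rewrite <- minus_INR by lia; f_equal; lia).
    simpl pow. ring.
Qed.

Lemma Qzero s u : (s < u)%nat -> rising (- INR s) u = 0.
Proof. intros H. unfold rising. apply (prodR_zero _ _ s H). ring. Qed.

Lemma bb_big j t : (t < j)%nat -> bb j t = 0.
Proof. intros H. unfold bb. rewrite (proj2 (Nat.leb_gt j t)) by lia. reflexivity. Qed.

Definition xx : R := PI ^ 2 / 36.
Definition w (u : nat) : R := xx ^ u / INR (fact (2 * u - 1)).

Lemma term_eq s u : (1 <= s)%nat ->
  (-1) ^ s * rising (/2 - INR s) (S s) / INR s *
   ((-1) ^ u * rising (- INR s) u / (INR (fact (s + u)) * INR (fact (2 * u - 1))) * (PI ^ 2 / 36) ^ u)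
  = bb u s / (2 * INR s) * w u.
Proof.
  intros Hs. unfold w, xx. assert (0 < INR s) by (apply lt_0_INR; lia).
  pose proof (fpos (s+u)). pose proof (fpos (2*u-1)).
  destruct (Nat.le_gt_cases u s) as [Hu|Hu].
  - pose proof (Pval s). pose proof (Qval s u Hu).
    unfold bb. rewrite (proj2 (Nat.leb_le u s)) by lia.
    pose proof (fpos s). pose proof (fpos (s - u)). pose proof (fpos (2*s)).
    assert (0 < 4 ^ s) by (apply pow_lt; lra).
    generalize dependent (rising (/2 - INR s) (S s)). intros P HP.
    generalize dependent (rising (- INR s) u). intros Q HQ.
    generalize dependent ((-1) ^ s). intros A HP.
    generalize dependent ((-1) ^ u). intros Bq HQ.
    assert (EP : A * P = INR (fact (2 * s)) / (2 * 4 ^ s * INR (fact s))) by (rewrite <- HP; field; lra).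
    assert (EQ : Bq * Q = INR (fact s) / INR (fact (s - u))) by (rewrite <- HQ; field; lra).
    replace (A * P / INR s * (Bq * Q / (INR (fact (s + u)) * INR (fact (2 * u - 1))) * (PI ^ 2 / 36) ^ u))
      with ((A * P) * (Bq * Q) / INR s / (INR (fact (s + u)) * INR (fact (2 * u - 1))) * (PI ^ 2 / 36) ^ u)
      by (field; repeat split; lra).
    rewrite EP, EQ. field. repeat split; lra.
  - rewrite Qzero by lia. rewrite bb_big by lia. unfold Rdiv. ring.
Qed.

Lemma S1_eq t N : (t <= N)%nat ->
  S1 t = sm N (fun v => w (S v) / 2 * (1 - G (S v) t) / INR (S v)).
Proof.
  intros HN. unfold S1. rewrite sumR_sm.
  rewrite (sm_ext t _ (fun k => sm N (fun v => bb (S v) (S k) / (2 * INR (S k)) * w (S v)))).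
  2: { intros k Hk. rewrite sumR_sm. rewrite <- sm_scale.
       rewrite (sm_zero_tail (S k) N (fun v => bb (S v) (S k) / (2 * INR (S k)) * w (S v))).
       - apply sm_ext. intros v Hv. apply term_eq. lia.
       - intros v Hv. rewrite bb_big by lia. unfold Rdiv. ring.
       - lia. }
  rewrite sm_swap. apply sm_ext. intros v Hv.
  pose proof (sumq (S v) t ltac:(lia)) as Hq.
  assert (0 < INR (S v)) by (apply lt_0_INR; lia).
  rewrite (sm_ext t _ (fun k => (w (S v) / 2) * (bb (S v) (S k) / INR (S k)))).
  2: { intros k Hk. assert (0 < INR (S k)) by (apply lt_0_INR; lia). field. lra. }
  rewrite sm_scale.
  replace (sm t (fun k => bb (S v) (S k) / INR (S k))) with ((1 - G (S v) t) / INR (S v)).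
  - field. lra.
  - rewrite <- Hq. field. lra.
Qed.

Definition ex (a : R) (n : nat) : R := sum_f_R0 (fun i => / INR (fact i) * a ^ i) n.

Lemma ex_cv a : Un_cv (ex a) (exp a).
Proof. unfold ex, exp. exact (proj2_sig (exist_exp a)). Qed.

Lemma opp_even a k : (- a) ^ (2 * k) = a ^ (2 * k).
Proof. replace (-a) with ((-1) * a) by ring. rewrite Rpow_mult_distr, pow_1_even. ring. Qed.

Lemma opp_odd a k : (- a) ^ S (2 * k) = - a ^ S (2 * k).
Proof. replace (-a) with ((-1) * a) by ring. rewrite Rpow_mult_distr, pow_1_odd. ring. Qed.

Lemma sf_S f n : sum_f_R0 f (S n) = sum_f_R0 f n + f (S n).
Proof. reflexivity. Qed.

Ltac exsplit a N :=
  rewrite (sf_S (fun i => / INR (fact i) * a ^ i) (S (S (2*N))));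
  rewrite (sf_S (fun i => / INR (fact i) * a ^ i) (S (2*N)));
  rewrite (sf_S (fun i => / INR (fact i) * (- a) ^ i) (S (S (2*N))));
  rewrite (sf_S (fun i => / INR (fact i) * (- a) ^ i) (S (2*N))).

Lemma ex_even a N : ex a (S (2 * N)) + ex (- a) (S (2 * N))
  = 2 * (1 + sm N (fun v => a ^ (2 * S v) / INR (fact (2 * S v)))).
Proof.
  induction N.
  - unfold ex. simpl. field.
  - replace (S (2 * S N)) with (S (S (S (2 * N)))) by lia.
    unfold ex in *. exsplit a N. rewrite smS.
    replace (S (S (2 * N))) with (2 * S N)%nat by lia.
    replace (S (2 * S N)) with (S (2 * S N)) by lia.
    rewrite opp_even, opp_odd.
    replace (sum_f_R0 (fun i : nat => / INR (fact i) * a ^ i) (S (2 * N)) +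
      / INR (fact (2 * S N)) * a ^ (2 * S N) + / INR (fact (S (2 * S N))) * a ^ S (2 * S N) +
      (sum_f_R0 (fun i : nat => / INR (fact i) * (- a) ^ i) (S (2 * N)) +
      / INR (fact (2 * S N)) * a ^ (2 * S N) + / INR (fact (S (2 * S N))) * - a ^ S (2 * S N)))
    with ((sum_f_R0 (fun i : nat => / INR (fact i) * a ^ i) (S (2 * N)) +
           sum_f_R0 (fun i : nat => / INR (fact i) * (- a) ^ i) (S (2 * N))) +
          2 * (a ^ (2 * S N) / INR (fact (2 * S N)))) by (unfold Rdiv; ring).
    rewrite IHN. ring.
Qed.

Lemma ex_odd a N : ex a (S (2 * N)) - ex (- a) (S (2 * N))
  = 2 * sm (S N) (fun v => a ^ S (2 * v) / INR (fact (S (2 * v)))).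
Proof.
  induction N.
  - unfold ex. simpl. field.
  - replace (S (2 * S N)) with (S (S (S (2 * N)))) by lia.
    unfold ex in *. exsplit a N. rewrite (smS (S N)).
    replace (S (S (2 * N))) with (2 * S N)%nat by lia.
    rewrite opp_even, opp_odd.
    replace (sum_f_R0 (fun i : nat => / INR (fact i) * a ^ i) (S (2 * N)) +
      / INR (fact (2 * S N)) * a ^ (2 * S N) + / INR (fact (S (2 * S N))) * a ^ S (2 * S N) -
      (sum_f_R0 (fun i : nat => / INR (fact i) * (- a) ^ i) (S (2 * N)) +
      / INR (fact (2 * S N)) * a ^ (2 * S N) + / INR (fact (S (2 * S N))) * - a ^ S (2 * S N)))
    with ((sum_f_R0 (fun i : nat => / INR (fact i) * a ^ i) (S (2 * N)) -
           sum_f_R0 (fun i : nat => / INR (fact i) * (- a) ^ i) (S (2 * N))) +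
          2 * (a ^ S (2 * S N) / INR (fact (S (2 * S N))))) by (unfold Rdiv; ring).
    rewrite IHN. ring.
Qed.

Lemma D_bounds t v : (1 <= t)%nat ->
  0 <= 1 / (2 * INR t) - G (S v) t / (2 * INR (S v) * (INR (2 * t + 1) * bb 0 t)) /\
  1 / (2 * INR t) - G (S v) t / (2 * INR (S v) * (INR (2 * t + 1) * bb 0 t)) <= (1 + INR (S v) ^ 2) / (4 * INR t ^ 2).
Proof.
  intros Ht. assert (HT : 1 <= INR t) by (apply (le_INR 1); lia).
  pose proof (bb0_pos t) as HB.
  pose proof (G_up (S v) t) as Gu. pose proof (G_low (S v) t Ht) as Gl.
  assert (HU : 1 <= INR (S v)) by (apply (le_INR 1); lia).
  rewrite plus_INR, mult_INR in *. simpl (INR 2) in *. simpl (INR 1) in *.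
  set (U := INR (S v)) in *. set (T := INR t) in *. set (B := bb 0 t) in *.
  set (Gv := G (S v) t) in *.
  set (r := Gv / (2 * U * ((1 + 1) * T + 1) * B)).
  assert (Hr : r * (2 * U * B) * (2 * T + 1) = Gv) by (unfold r; field; repeat split; lra).
  assert (HUB : 0 < 2 * U * B) by nra.
  assert (r1 : r * (2 * T + 1) <= 1).
  { apply (Rmult_le_reg_r (2 * U * B)); [lra|]. nra. }
  assert (r2 : 1 - U ^ 2 / (2 * T) <= r * (2 * T + 1)).
  { apply (Rmult_le_reg_r (2 * U * B)); [lra|].
    replace ((1 - U ^ 2 / (2 * T)) * (2 * U * B)) with (B * (2 * U - U ^ 3 / T)) by (field; lra).
    nra. }
  replace (2 * U * (((1 + 1) * T + 1) * B)) with (2 * U * ((1 + 1) * T + 1) * B) by ring.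
  fold r. split.
  - assert (r <= 1 / (2 * T + 1)).
    { apply (Rmult_le_reg_r (2 * T + 1)); [lra|]. unfold Rdiv. rewrite Rmult_1_l, Rinv_l by lra. lra. }
    assert (1 / (2 * T + 1) <= 1 / (2 * T)).
    { apply Rmult_le_compat_l; [lra|]. apply Rinv_le_contravar; lra. }
    lra.
  - assert (1 / (2 * T) - r <= (1 + U ^ 2) / (2 * T * (2 * T + 1))).
    { assert (r >= (1 - U ^ 2 / (2 * T)) / (2 * T + 1)).
      { apply Rle_ge. apply (Rmult_le_reg_r (2 * T + 1)); [lra|].
        replace ((1 - U ^ 2 / (2 * T)) / (2 * T + 1) * (2 * T + 1)) with (1 - U ^ 2 / (2 * T)) by (field; lra). lra. }
      assert (E : 1 / (2 * T) - (1 - U ^ 2 / (2 * T)) / (2 * T + 1) = (1 + U ^ 2) / (2 * T * (2 * T + 1)))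
        by (field; lra).
      lra. }
    assert ((1 + U ^ 2) / (2 * T * (2 * T + 1)) <= (1 + U ^ 2) / (4 * T ^ 2)).
    { unfold Rdiv. apply Rmult_le_compat_l; [nra|]. apply Rinv_le_contravar; nra. }
    lra.
Qed.

Lemma fact_ineq v : 1 + INR (S v) ^ 2 <= 2 * INR (fact (2 * S v - 1)).
Proof.
  replace (2 * S v - 1)%nat with (S (2 * v)) by lia.
  induction v.
  - simpl. lra.
  - replace (2 * S v)%nat with (S (S (2 * v))) by lia.
    rewrite (factS (S (S (2*v)))), (factS (S (2*v))). rewrite !S_INR in *. rewrite mult_INR in *. simpl (INR 2) in *.
    pose proof (pos_INR v). pose proof (fpos (S (2*v))).
    set (V := INR v) in *. set (F := INR (fact (S (2 * v)))) in *.
    nra.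
Qed.

Lemma xx_bounds : 0 < xx /\ xx <= 4 / 9.
Proof. unfold xx. pose proof PI_RGT_0. pose proof PI_4. split; nra. Qed.

Lemma w_bound v : 0 <= w (S v) /\ w (S v) * (1 + INR (S v) ^ 2) <= 2 * xx ^ S v.
Proof.
  destruct xx_bounds as [H0 H1]. unfold w. pose proof (fpos (2 * S v - 1)).
  pose proof (fact_ineq v). assert (0 < xx ^ S v) by (apply pow_lt; lra).
  split.
  - apply Rlt_le, Rdiv_lt_0_compat; lra.
  - apply (Rmult_le_reg_r (INR (fact (2 * S v - 1)))); [lra|].
    replace (xx ^ S v / INR (fact (2 * S v - 1)) * (1 + INR (S v) ^ 2) * INR (fact (2 * S v - 1)))
      with (xx ^ S v * (1 + INR (S v) ^ 2)) by (field; lra).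
    nra.
Qed.

Lemma geom M : sm M (fun v => xx ^ S v) <= 4 / 5.
Proof.
  destruct xx_bounds as [H0 H1].
  assert (E : sm M (fun v => xx ^ S v) * (1 - xx) = xx - xx ^ S M).
  { induction M. - simpl. ring. - rewrite smS, Rmult_plus_distr_r, IHM. simpl. ring. }
  assert (0 < xx ^ S M) by (apply pow_lt; lra).
  assert (sm M (fun v => xx ^ S v) * (1 - xx) <= xx) by lra.
  assert (sm M (fun v => xx ^ S v) <= xx / (1 - xx)).
  { apply (Rmult_le_reg_r (1 - xx)); [lra|]. replace (xx / (1 - xx) * (1 - xx)) with xx by (field; lra). lra. }
  assert (xx / (1 - xx) <= 4 / 5).
  { apply (Rmult_le_reg_r (1 - xx)); [lra|]. replace (xx / (1 - xx) * (1 - xx)) with xx by (field; lra). lra. }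
  lra.
Qed.

Lemma cv_const c : Un_cv (fun _ => c) c.
Proof. intros eps He. exists 0%nat. intros. unfold Rdist. rewrite Rminus_diag, Rabs_R0. lra. Qed.

Lemma cv_ext u v l : (forall n, u n = v n) -> Un_cv u l -> Un_cv v l.
Proof. intros E H eps He. destruct (H eps He) as [N HN]. exists N. intros n Hn. rewrite <- E. auto. Qed.

Lemma cv_sub u l (phi : nat -> nat) : Un_cv u l -> (forall n, (n <= phi n)%nat) -> Un_cv (fun n => u (phi n)) l.
Proof. intros H Hp eps He. destruct (H eps He) as [N HN]. exists N. intros n Hn. apply HN. specialize (Hp n). unfold ge in *. lia. Qed.

Lemma lin4 A1 B1 A2 B2 a1 b1 a2 b2 c0 c1 c2 c3 c4 :
  Un_cv A1 a1 -> Un_cv B1 b1 -> Un_cv A2 a2 -> Un_cv B2 b2 ->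
  Un_cv (fun n => c0 + c1 * A1 n + c2 * B1 n + c3 * A2 n + c4 * B2 n)
        (c0 + c1 * a1 + c2 * b1 + c3 * a2 + c4 * b2).
Proof.
  intros H1 H2 H3 H4.
  repeat apply CV_plus; try apply CV_mult; auto; apply cv_const.
Qed.

Lemma alpha2 : alpha ^ 2 = xx.
Proof. unfold alpha, xx. field. Qed.

Lemma cosh_part M : (ex alpha (S (2 * M)) + ex (- alpha) (S (2 * M))) / 2 - 1
  = sm M (fun v => w (S v) / (2 * INR (S v))).
Proof.
  replace ((ex alpha (S (2 * M)) + ex (- alpha) (S (2 * M))) / 2 - 1)
    with (sm M (fun v => alpha ^ (2 * S v) / INR (fact (2 * S v)))) by (rewrite ex_even; field).
  apply sm_ext. intros v _. unfold w. rewrite pow_mult, alpha2.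
  replace (2 * S v - 1)%nat with (S (2 * v)) by lia.
  replace (2 * S v)%nat with (S (S (2 * v))) by lia.
  rewrite (factS (S (2 * v))). pose proof (fpos (S (2*v))). pose proof (pos_INR v).
  rewrite !S_INR, mult_INR. simpl (INR 2). field. lra.
Qed.

Lemma sinh_part M : alpha * ((ex alpha (S (2 * M)) - ex (- alpha) (S (2 * M))) / 2)
  = sm (S M) (fun v => w (S v)).
Proof.
  replace ((ex alpha (S (2 * M)) - ex (- alpha) (S (2 * M))) / 2)
    with (sm (S M) (fun v => alpha ^ S (2 * v) / INR (fact (S (2 * v))))) by (rewrite ex_odd; field).
  rewrite <- sm_scale. apply sm_ext. intros v _. unfold w.
  replace (2 * S v - 1)%nat with (S (2 * v)) by lia.
  rewrite <- alpha2, <- pow_mult. replace (2 * S v)%nat with (S (S (2 * v))) by lia.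
  simpl pow. unfold Rdiv. ring.
Qed.

Theorem mainTheorem10 (t : nat) (ht : (1 <= t)%nat) :
  - (1 / (8 * INR t ^ 2)) <
    S1 t / ((-1) ^ t * gbinom (-3/2) t)
    - (-1) ^ t / gbinom (-3/2) t * (cosh alpha - 1)
    + alpha * sinh alpha / (2 * INR t)
  /\
    S1 t / ((-1) ^ t * gbinom (-3/2) t)
    - (-1) ^ t / gbinom (-3/2) t * (cosh alpha - 1)
    + alpha * sinh alpha / (2 * INR t)
  < 13 / (25 * INR t ^ 2).
Proof.
  assert (HT : 1 <= INR t) by (apply (le_INR 1); lia).
  pose proof (bb0_pos t) as HB.
  set (g0 := INR (2 * t + 1) * bb 0 t).
  assert (Hg0 : 0 < g0).
  { unfold g0. apply Rmult_lt_0_compat; [|lra]. apply lt_0_INR. lia. }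
  assert (Hgq : (-1) ^ t * gbinom (-3/2) t = g0) by apply g_eq.
  assert (Hpm : (-1) ^ t * (-1) ^ t = 1).
  { rewrite <- pow_add. replace (t + t)%nat with (2 * t)%nat by lia. apply pow_1_even. }
  assert (Hk : (-1) ^ t / gbinom (-3/2) t = 1 / g0).
  { rewrite <- Hgq. assert (gbinom (-3/2) t <> 0).
    { intro Hz. rewrite Hz in Hgq. lra. }
    assert ((-1) ^ t <> 0) by (intro Hz; rewrite Hz in Hpm; lra).
    replace (1 / ((-1) ^ t * gbinom (-3/2) t)) with ((-1) ^ t * (-1) ^ t / ((-1) ^ t * gbinom (-3/2) t)) by (rewrite Hpm; reflexivity). field. split; auto. }
  rewrite Hgq, Hk.
  set (E := S1 t / g0 - 1 / g0 * (cosh alpha - 1) + alpha * sinh alpha / (2 * INR t)).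
  set (M := fun n => S (n + t)).
  set (F := fun n => sm (M n) (fun v => w (S v) *
          (1 / (2 * INR t) - G (S v) t / (2 * INR (S v) * g0)))).
  assert (Fcv : Un_cv F E).
  { pose proof (cv_sub _ _ (fun n => S (2 * M n)) (ex_cv alpha) ltac:(intros n; cbv beta; unfold M; lia)) as C1.
    pose proof (cv_sub _ _ (fun n => S (2 * M n)) (ex_cv (- alpha)) ltac:(intros n; cbv beta; unfold M; lia)) as C2.
    pose proof (cv_sub _ _ (fun n => S (2 * (n + t))) (ex_cv alpha) ltac:(intros n; cbv beta; lia)) as C3.
    pose proof (cv_sub _ _ (fun n => S (2 * (n + t))) (ex_cv (- alpha)) ltac:(intros n; cbv beta; lia)) as C4.
    pose proof (lin4 _ _ _ _ _ _ _ _ (S1 t / g0 + 1 / g0) (- (1 / g0) / 2) (- (1 / g0) / 2)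
       (alpha / 2 / (2 * INR t)) (- (alpha / 2 / (2 * INR t))) C1 C2 C3 C4) as L.
    replace (S1 t / g0 + 1 / g0 + - (1 / g0) / 2 * exp alpha + - (1 / g0) / 2 * exp (- alpha) +
        alpha / 2 / (2 * INR t) * exp alpha + - (alpha / 2 / (2 * INR t)) * exp (- alpha)) with E in L.
    2: { unfold E, cosh, sinh. field. lra. }
    apply (cv_ext _ _ _ ) with (2 := L). intros n. cbv beta.
    transitivity (S1 t / g0 - 1 / g0 * ((ex alpha (S (2 * M n)) + ex (- alpha) (S (2 * M n))) / 2 - 1)
       + alpha * ((ex alpha (S (2 * (n + t))) - ex (- alpha) (S (2 * (n + t)))) / 2) / (2 * INR t)).
    { field. lra. }
    rewrite cosh_part, sinh_part. fold (M n).
    rewrite (S1_eq t (M n)) by (unfold M; lia).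
    unfold F.
    rewrite (sm_ext (M n) (fun v => w (S v) * (1 / (2 * INR t) - G (S v) t / (2 * INR (S v) * g0)))
       (fun v => (1 / g0) * (w (S v) / 2 * (1 - G (S v) t) / INR (S v)) +
                 ((- (1 / g0)) * (w (S v) / (2 * INR (S v))) + (1 / (2 * INR t)) * w (S v)))).
    2: { intros v _. assert (0 < INR (S v)) by (apply lt_0_INR; lia). field. repeat split; lra. }
    rewrite !sm_plus, !sm_scale. field. lra. }
  assert (Fb : forall n, 0 <= F n <= 2 / 5 / INR t ^ 2).
  { intros n. unfold F. split.
    - apply Rle_trans with (sm (M n) (fun _ => 0)).
      { clear. induction (M n); simpl; lra. }
      apply sm_le. intros v. destruct (w_bound v) as [Hw _]. destruct (D_bounds t v ht) as [D1 _].
      fold g0 in D1. apply Rmult_le_pos; auto.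
    - apply Rle_trans with (sm (M n) (fun v => / (2 * INR t ^ 2) * xx ^ S v)).
      + apply sm_le. intros v. destruct (w_bound v) as [Hw Hw2]. destruct (D_bounds t v ht) as [D1 D2].
        fold g0 in D1, D2.
        apply Rle_trans with (w (S v) * ((1 + INR (S v) ^ 2) / (4 * INR t ^ 2))).
        { apply Rmult_le_compat_l; auto. }
        replace (w (S v) * ((1 + INR (S v) ^ 2) / (4 * INR t ^ 2)))
          with ((w (S v) * (1 + INR (S v) ^ 2)) * / (4 * INR t ^ 2)) by (field; lra).
        replace (/ (2 * INR t ^ 2) * xx ^ S v) with ((2 * xx ^ S v) * / (4 * INR t ^ 2)) by (field; lra).
        apply Rmult_le_compat_r; auto. apply Rlt_le, Rinv_0_lt_compat. nra.
      + rewrite sm_scale. pose proof (geom (M n)).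
        replace (2 / 5 / INR t ^ 2) with (/ (2 * INR t ^ 2) * (4 / 5)) by (field; lra).
        apply Rmult_le_compat_l; auto. apply Rlt_le, Rinv_0_lt_compat. nra. }
  assert (E0 : 0 <= E).
  { apply (@Rle_cv_lim (fun _ => 0) F); auto. - intros n. apply Fb. - apply cv_const. }
  assert (E1 : E <= 2 / 5 / INR t ^ 2).
  { apply (@Rle_cv_lim F (fun _ => 2 / 5 / INR t ^ 2)); auto. - intros n. apply Fb. - apply cv_const. }
  assert (0 < INR t ^ 2) by nra.
  split.
  - assert (0 < 1 / (8 * INR t ^ 2)) by (apply Rdiv_lt_0_compat; lra). lra.
  - assert (2 / 5 / INR t ^ 2 < 13 / (25 * INR t ^ 2)).
    { apply (Rmult_lt_reg_r (INR t ^ 2)); auto.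
      replace (2 / 5 / INR t ^ 2 * INR t ^ 2) with (2/5) by (field; lra).
      replace (13 / (25 * INR t ^ 2) * INR t ^ 2) with (13/25) by (field; lra). lra. }
    lra.
Qed.
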